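(* Let $d,r$ be non-negative integers. If a matroid $M$ has a $(d,r)$-decomposition, then $M$ has a rooted $(d,r)$-decomposition.
   Context: For a matroid $M$ with rank function $r_M$ and disjoint sets $X,Y$ of elements, $\lambda_M(X,Y)=r_M(X)+r_M(Y)-r_M(X\cup Y)$. For pairwise disjoint sets $X_1,\dots,X_k$ of elements, $\lambda^*_M(X_1,\dots,X_k)=\max_{I\subseteq[k]}\lambda_M\big(\bigcup_{i\in I}X_i,\bigcup_{i\in[k]\setminus I}X_i\big)$. A $(d,r)$-decomposition of a matroid $M$ is a tree $T$ of radius $d$ whose leaves are in one-to-one correspondence with the elements of $M$, such that for every inner (non-leaf) vertex $v$ of $T$ with $k$ neighbours, if $X_1,\dots,X_k$ are the sets of elements of $M$ assigned to the leaves of the $k$ components of $T\setminus v$, then $\lambda^*_M(X_1,\dots,X_k)\le r$. A rooted $(d,r)$-decomposition of $M$ is a rooted tree $T$ of depth $d$ (the depth being the maximum number of edges on a path from the root to a leaf) whose leaves are in one-to-one correspondence with the elements of $M$, such that for every inner vertex $v$ of $T$ with $k$ children, if $X_1,\dots,X_k$ are the sets of elements of $M$ assigned to the leaves of the $k$ subtrees rooted at the children of $v$, then $\lambda^*_M(X_1,\dots,X_k)\le r$. *)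

(* Defs.v *)
From mathcomp Require Import all_boot.
Set Implicit Arguments. Unset Strict Implicit. Unset Printing Implicit Defensive.

Record matroid (E : finType) := Matroid {
  rank : {set E} -> nat;
  rank_card : forall X : {set E}, rank X <= #|X|;
  rank_mono : forall X Y : {set E}, X \subset Y -> rank X <= rank Y;
  rank_submod : forall X Y : {set E},
      rank (X :|: Y) + rank (X :&: Y) <= rank X + rank Y }.

(* lambda_M(X,Y) = r(X) + r(Y) - r(X u Y)  (never truncated, by submodularity) *)
Definition lam (E : finType) (M : matroid E) (X Y : {set E}) : nat :=
  rank M X + rank M Y - rank M (X :|: Y).

Definition lamstar (E : finType) (M : matroid E) (K : finType) (A : {set K})
    (X : K -> {set E}) : nat :=
  \max_(I : {set K} | I \subset A)
     lam M (\bigcup_(i in I) X i) (\bigcup_(i in A :\: I) X i).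

Section Trees.
Variables (V : finType) (e : rel V).

Definition has_cycle : Prop :=
  exists (x : V) (p : seq V),
    [/\ uniq (x :: p), 2 <= size p, path e x p & e (last x p) x].

Definition is_tree : Prop :=
  [/\ 0 < #|V|, symmetric e, irreflexive e,
      (forall x y : V, connect e x y) & ~ has_cycle].

(* a leaf is a vertex of degree at most one (degree 0 only for the
   one-vertex tree) *)
Definition leaf (v : V) : bool := #|[set u | e v u]| <= 1.

Definition within (x y : V) (n : nat) : Prop :=
  exists p : seq V, [/\ path e x p, last x p = y & size p <= n].

Definition radius_eq (d : nat) : Prop :=
  (exists c : V, forall y : V, within c y d) /\
  (forall (n : nat) (c : V), n < d -> exists y : V, ~ within c y n).

Definition depth_eq (rt : V) (d : nat) : Prop :=
  (forall y : V, leaf y -> within rt y d) /\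
  (exists y : V, leaf y /\ forall n : nat, n < d -> ~ within rt y n).

Definition nbhd (v : V) : {set V} := [set u | e v u].

Definition comp (v u w : V) : bool :=
  connect [rel a b | [&& e a b, a != v & b != v]] u w.

Definition children (rt v : V) : {set V} :=
  [set u | e v u & ~~ comp v u rt].

End Trees.

Definition elts (E V : finType) (e : rel V) (f : E -> V) (v u : V) : {set E} :=
  [set x | comp e v u (f x)].

Definition leaf_bij (E V : finType) (e : rel V) (f : E -> V) : Prop :=
  injective f /\ (forall v : V, leaf e v <-> exists x : E, f x = v).

Definition has_decomposition (E : finType) (M : matroid E) (d r : nat) : Prop :=
  exists (V : finType) (e : rel V) (f : E -> V),
    [/\ is_tree e, radius_eq e d, leaf_bij e f &
        forall v : V, ~~ leaf e v ->
          lamstar M (nbhd e v) (elts e f v) <= r].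

Definition has_rooted_decomposition (E : finType) (M : matroid E) (d r : nat)
    : Prop :=
  exists (V : finType) (e : rel V) (rt : V) (f : E -> V),
    [/\ is_tree e, depth_eq e rt d, leaf_bij e f &
        forall v : V, ~~ leaf e v ->
          lamstar M (children e rt v) (elts e f v) <= r].

(* Main.v *)
Require Import Defs.
From mathcomp Require Import all_boot.
From mathcomp Require Import zify.
Set Implicit Arguments. Unset Strict Implicit. Unset Printing Implicit Defensive.

Lemma lam_monoR (E : finType) (M : matroid E) (X Y Y' : {set E}) :
  Y \subset Y' -> lam M X Y <= lam M X Y'.
Proof.
move=> sYY'; rewrite /lam.
have A := rank_submod M Y' (X :|: Y).
have E1 : Y' :|: (X :|: Y) = X :|: Y'.
  apply/setP=> z; rewrite !inE; case: (boolP (z \in Y)) => hz.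
    by rewrite (subsetP sYY' z hz) !orbT.
  by rewrite orbF orbC.
rewrite E1 in A.
have B : rank M Y <= rank M (Y' :&: (X :|: Y)).
  apply: rank_mono; apply/subsetP=> z hz; rewrite !inE hz orbT andbT.
  exact: (subsetP sYY').
have C := rank_submod M X Y.
lia.
Qed.

Lemma bigcup_mono (E K : finType) (A B : {set K}) (X : K -> {set E}) :
  A \subset B -> \bigcup_(i in A) X i \subset \bigcup_(i in B) X i.
Proof.
move=> sAB; apply/bigcupsP=> i hi; apply: bigcup_sup; exact: (subsetP sAB).
Qed.

Lemma lamstar_mono (E : finType) (M : matroid E) (K : finType) (A B : {set K})
    (X : K -> {set E}) : A \subset B -> lamstar M A X <= lamstar M B X.
Proof.
move=> sAB; rewrite /lamstar; apply/bigmax_leqP=> I sIA.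
apply: leq_trans (leq_bigmax_cond _ (subset_trans sIA sAB)).
apply: lam_monoR; apply: bigcup_mono; exact: setSD.
Qed.

Section Tree.
Variables (V : finType) (e : rel V).

Lemma shortcut (y : V) : forall p x, path e x p -> y \in x :: p -> last x p != y ->
  exists q, [/\ path e x q, last x q = y & size q < size p].
Proof.
elim=> [|z p IH] x /=.
  by move=> _; rewrite inE => /eqP -> /eqP.
move=> /andP[exz pz]; rewrite inE; case: (eqVneq y x) => [-> _ _|nyx /= hy hl].
  by exists [::].
have [q [q1 q2 q3]] := IH z pz hy hl.
by exists (z :: q); rewrite /= exz q1 q2.
Qed.

Lemma path_avoid (y : V) : forall p x, path e x p -> y \notin x :: p ->
  path [rel a b | [&& e a b, a != y & b != y]] x p.
Proof.
elim=> [|z p IH] x //= /andP[exz pz]; rewrite !inE negb_or => /andP[nxy].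
rewrite negb_or => /andP[nzy nzp].
rewrite eq_sym in nxy; rewrite eq_sym in nzy.
rewrite /= exz nxy nzy /=.
by apply: IH => //; rewrite inE negb_or eq_sym nzy.
Qed.

Lemma path_avoid_mem (y : V) : forall p x,
  path [rel a b | [&& e a b, a != y & b != y]] x p -> x != y -> y \notin x :: p.
Proof.
elim=> [|z p IH] x /=; first by rewrite inE eq_sym.
move=> /andP[/and3P[_ nx nz] pz] _.
by rewrite inE negb_or eq_sym nx /= IH.
Qed.

Lemma path_sub (e' : rel V) : subrel e' e -> forall p x, path e' x p -> path e x p.
Proof. move=> s; elim=> [|z p IH] x //= /andP[h1 h2]; by rewrite s // IH. Qed.

End Tree.

Theorem proposition2p1 (E : finType) (M : matroid E) (d r : nat) :
  has_decomposition M d r -> has_rooted_decomposition M d r.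
Proof.
move=> [V [e [f [tree [[c hc] hfar] bij hlam]]]].
have [cardV sym irr conn nocyc] := tree.
exists V, e, c, f; split => //; last first.
  move=> v nl; apply: leq_trans (hlam v nl); apply: lamstar_mono.
  by apply/subsetP=> u; rewrite !inE => /andP[].
split; first by move=> y _; exact: hc.
case: d hc hfar {hlam} => [|d] hc hfar.
  exists c; split => //.
  rewrite /leaf; apply: leq_trans (_ : 0 <= 1) => //; rewrite leqn0 cards_eq0.
  apply/eqP/setP=> u; rewrite !inE.
  have [p [_ pl ps]] := hc u.
  case: p pl ps => //= <- _; by rewrite irr.
have [y hy] := hfar d c (ltnSn d).
have nw : forall n, n < d.+1 -> ~ within e c y n.
  move=> n hn [p [p1 p2 p3]]; apply: hy; exists p; split => //; exact: leq_trans p3 _.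
exists y; split => //.
have nyc : y != c.
  apply/eqP => eyc; apply: (nw 0) => //; exists [::]; by rewrite eyc.
rewrite /leaf leqNgt; apply/negP => /card_gt1P [u [w [hu hw nuw]]].
rewrite !inE in hu hw.
set e' := [rel a b | [&& e a b, a != y & b != y]].
have avoid : forall z, e y z -> connect e' c z.
  move=> z eyz.
  have [p [p1 p2 p3]] := hc z.
  have nzy : z != y by apply/eqP => ezy; move: eyz; rewrite ezy irr.
  have hny : y \notin c :: p.
    apply/negP => hin.
    have hl : last c p != y by rewrite p2.
    have [q [q1 q2 q3]] := shortcut p1 hin hl.
    apply: (nw (size q)); first by apply: leq_trans p3; exact: q3.
    by exists q.
  apply/connectP; exists p; last by rewrite p2.
  exact: path_avoid.
have csym : connect_sym e'.
  by apply: sym_connect_sym => a b /=; rewrite sym; case: (e b a); case: (a != y); case: (b != y).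
have cuw : connect e' u w.
  by apply: connect_trans (avoid w hw); rewrite csym; exact: avoid.
move/connectP: cuw => [p pp pl].
move: pl; case: (shortenP pp) => p' pp' up' _ pl.
have pl' : last u p' = w by [].
have nuy : u != y by apply/eqP => ezy; move: hu; rewrite ezy irr.
have hny := path_avoid_mem pp' nuy.
apply: nocyc; exists y, (u :: p'); split.
- by rewrite cons_uniq hny up'.
- clear pl; case: p' {pp' up' hny} pl' => [/= euw|]; first by rewrite euw eqxx in nuw.
  by [].
- by rewrite /= hu /=; apply: path_sub pp' => a b /and3P[].
- by change (e (last u p') y); rewrite pl' sym.
Qed.
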